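(* Let $(M^4,g)$ be an oriented Einstein $4$-manifold whose sectional curvature is semi-definite (i.e. either $\sec_g\ge 0$ everywhere or $\sec_g\le 0$ everywhere). Then at every point of $M$ \[ \frac{|s_g|}{\sqrt{6}}\geq |W^+|+|W^-|. \] *)

(* Defs.v *)
(* Pointwise (algebraic) model of an oriented Riemannian
   4-manifold: at each point p : M the Riemann tensor is given by its
   components in an oriented orthonormal frame (e_0,e_1,e_2,e_3) of T_pM,
   so the metric is the standard dot product on R^4 and the orientation is
   e_0/\e_1/\e_2/\e_3. *)
From HB Require Import structures.
From mathcomp Require Import all_boot all_order all_algebra.
Set Implicit Arguments. Unset Strict Implicit. Unset Printing Implicit Defensive.
Import Order.TTheory GRing.Theory Num.Theory.
Local Open Scope ring_scope.

Section Curvature4.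
Variable R : rcfType.

Definition tensor4 := 'I_4 -> 'I_4 -> 'I_4 -> 'I_4 -> R.
Definition vec4 := 'I_4 -> R.
(* a 2-form / bivector, by its antisymmetric coefficients *)
Definition form2 := 'I_4 -> 'I_4 -> R.

Definition delta (i j : 'I_4) : R := (i == j)%:R.

(* algebraic curvature tensor, sign convention Rm(x,y,y,x) = sec(x,y) *)
Definition is_alg_curv (Rm : tensor4) : Prop :=
  [/\ (forall i j k l, Rm i j k l = - Rm j i k l),
      (forall i j k l, Rm i j k l = - Rm i j l k),
      (forall i j k l, Rm i j k l = Rm k l i j) &
      (forall i j k l, Rm i j k l + Rm j k i l + Rm k i j l = 0)].

Definition dot (u v : vec4) : R := \sum_i u i * v i.

Definition tensor_eval (T : tensor4) (x y z w : vec4) : R :=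
  \sum_i \sum_j \sum_k \sum_l x i * y j * z k * w l * T i j k l.

Definition lin_indep2 (u v : vec4) : Prop :=
  forall a b : R, (forall i, a * u i + b * v i = 0) -> a = 0 /\ b = 0.

Definition sec (Rm : tensor4) (u v : vec4) : R :=
  tensor_eval Rm u v v u / (dot u u * dot v v - (dot u v) ^+ 2).

Definition Ric (Rm : tensor4) (j k : 'I_4) : R := \sum_i Rm i j k i.
Definition scal (Rm : tensor4) : R := \sum_i Ric Rm i i.

Definition KN (h g : 'I_4 -> 'I_4 -> R) : tensor4 :=
  fun x y z w => h y z * g x w + h x w * g y z - h x z * g y w - h y w * g x z.

(* Weyl tensor: Rm = W + 1/2 (Ric - s/4 g) KN g + s/24 g KN g *)
Definition Weyl (Rm : tensor4) : tensor4 :=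
  let s := scal Rm in
  let E := fun j k => Ric Rm j k - s / 4%:R * delta j k in
  fun x y z w => Rm x y z w - 2%:R^-1 * KN E delta x y z w
                 - s / 24%:R * KN delta delta x y z w.

(* bilinear form on 2-forms induced by T: Q(x/\y, z/\w) = T(x,y,w,z);
   the norm is |a|^2 = 1/2 sum a_ij^2, so |e_i /\ e_j| = 1 *)
Definition formQ (T : tensor4) (a b : form2) : R :=
  4%:R^-1 * \sum_i \sum_j \sum_k \sum_l a i j * b k l * T i j l k.

Definition wedge (a b : 'I_4) : form2 :=
  fun i j => ((i == a) && (j == b))%:R - ((i == b) && (j == a))%:R.

Definition i0 : 'I_4 := @Ordinal 4 0 isT.
Definition i1 : 'I_4 := @Ordinal 4 1 isT.
Definition i2 : 'I_4 := @Ordinal 4 2 isT.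
Definition i3 : 'I_4 := @Ordinal 4 3 isT.

Definition fadd (a b : form2) : form2 := fun i j => a i j + b i j.
Definition fsub (a b : form2) : form2 := fun i j => a i j - b i j.

(* sqrt 2 times an orthonormal basis of self-dual (Lambda^+) and
   anti-self-dual (Lambda^-) 2-forms, for the Hodge star of the
   orientation e_0/\e_1/\e_2/\e_3 *)
Definition plus_raw (k : 'I_3) : form2 :=
  match val k with
  | 0 => fadd (wedge i0 i1) (wedge i2 i3)
  | 1 => fsub (wedge i0 i2) (wedge i1 i3)
  | _ => fadd (wedge i0 i3) (wedge i1 i2)
  end.
Definition minus_raw (k : 'I_3) : form2 :=
  match val k with
  | 0 => fsub (wedge i0 i1) (wedge i2 i3)
  | 1 => fadd (wedge i0 i2) (wedge i1 i3)
  | _ => fsub (wedge i0 i3) (wedge i1 i2)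
  end.

(* matrices of W^+ : Lambda^+ -> Lambda^+ and W^- in orthonormal bases *)
Definition Wplus (Rm : tensor4) (k l : 'I_3) : R :=
  2%:R^-1 * formQ (Weyl Rm) (plus_raw k) (plus_raw l).
Definition Wminus (Rm : tensor4) (k l : 'I_3) : R :=
  2%:R^-1 * formQ (Weyl Rm) (minus_raw k) (minus_raw l).

(* |W^+|, |W^-| : norms as endomorphisms of Lambda^+ resp. Lambda^- *)
Definition normWplus (Rm : tensor4) : R :=
  Num.sqrt (\sum_k \sum_l (Wplus Rm k l) ^+ 2).
Definition normWminus (Rm : tensor4) : R :=
  Num.sqrt (\sum_k \sum_l (Wminus Rm k l) ^+ 2).

End Curvature4.

(* Main.v *)
Require Import Defs.
From HB Require Import structures.
From mathcomp Require Import all_boot all_order all_algebra.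
From mathcomp Require Import ring lra.
From Stdlib Require Import FunctionalExtensionality.
Import Order.TTheory GRing.Theory Num.Theory.
Local Open Scope ring_scope.

Module Aux.
Set Implicit Arguments. Unset Strict Implicit. Unset Printing Implicit Defensive.

Lemma det3 (R : comNzRingType) (g : nat -> nat -> R) :
  \det (\matrix_(i < 3, j < 3) g i j) = g 0 0 * (g 1 1 * g 2 2 - g 1 2 * g 2 1)
         - g 0 1 * (g 1 0 * g 2 2 - g 1 2 * g 2 0)
         + g 0 2 * (g 1 0 * g 2 1 - g 1 1 * g 2 0).
Proof.
rewrite (expand_det_row _ 0) !big_ord_recr big_ord0 /= /cofactor.
rewrite !(expand_det_row _ 0) !big_ord_recr !big_ord0 /= /cofactor /= !det_mx11 !mxE /=.
rewrite !expr0 !expr1 !expr2. ring.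
Qed.

Ltac pos := repeat first [apply: sqr_ge0 | apply: addr_ge0 | apply: mulr_ge0 | lra].

Definition j0 : 'I_3 := @Ordinal 3 0 isT.
Definition j1 : 'I_3 := @Ordinal 3 1 isT.
Definition j2 : 'I_3 := @Ordinal 3 2 isT.

Lemma sum3 (V : nmodType) (F : 'I_3 -> V) : \sum_(i < 3) F i = F j0 + F j1 + F j2.
Proof.
rewrite !big_ord_recl big_ord0 addr0 addrA.
by congr (F _ + F _ + F _); apply: val_inj.
Qed.

Section L1.
Variable R : rcfType.

Definition sm (a b c d e f : R) (i j : nat) : R :=
  match i, j with
  | 0, 0 => a | 1, 1 => b | 2, 2 => c
  | 0, 1 | 1, 0 => d | 0, 2 | 2, 0 => e | _, _ => f end.

Lemma cs6 (x1 x2 x3 x4 x5 x6 y1 y2 y3 y4 y5 y6 : R) :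
  (x1*y1 + x2*y2 + x3*y3 + 2*(x4*y4 + x5*y5 + x6*y6))^+2 <=
  (x1^+2 + x2^+2 + x3^+2 + 2*(x4^+2 + x5^+2 + x6^+2)) *
  (y1^+2 + y2^+2 + y3^+2 + 2*(y4^+2 + y5^+2 + y6^+2)).
Proof.
rewrite -subr_ge0.
set L := (X in 0 <= X).
have -> : L = (x1*y2-x2*y1)^+2 + (x1*y3-x3*y1)^+2 + (x2*y3-x3*y2)^+2
  + 2*((x1*y4-x4*y1)^+2 + (x1*y5-x5*y1)^+2 + (x1*y6-x6*y1)^+2
     + (x2*y4-x4*y2)^+2 + (x2*y5-x5*y2)^+2 + (x2*y6-x6*y2)^+2
     + (x3*y4-x4*y3)^+2 + (x3*y5-x5*y3)^+2 + (x3*y6-x6*y3)^+2)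
  + 4*((x4*y5-x5*y4)^+2 + (x4*y6-x6*y4)^+2 + (x5*y6-x6*y5)^+2).
  by rewrite /L; ring.
by pos.
Qed.

Lemma L1 (a b c d e f : R) : a + b + c = 0 ->
  exists x y z : R, x^+2 + y^+2 + z^+2 = 1 /\
  a*x^+2 + b*y^+2 + c*z^+2 + 2*(d*x*y + e*x*z + f*y*z) <=
  - Num.sqrt ((a^+2+b^+2+c^+2 + 2*(d^+2+e^+2+f^+2)) / 6%:R).
Proof.
move=> habc.
have hc : c = - a - b by rewrite -(subr0 c) -habc; ring.
set N := a^+2+b^+2+c^+2 + 2*(d^+2+e^+2+f^+2).
set r := a*b*c + 2*d*e*f - a*f^+2 - b*e^+2 - c*d^+2.
have N0 : 0 <= N by rewrite /N; pos.
have hcs : 54%:R * r^+2 <= N^+3.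
  have := cs6 a b c d e f (a^+2+d^+2+e^+2 - N/3%:R) (d^+2+b^+2+f^+2 - N/3%:R)
     (e^+2+f^+2+c^+2 - N/3%:R) (a*d+d*b+e*f) (a*e+d*f+e*c) (d*e+b*f+f*c).
  have -> : (a * (a ^+ 2 + d ^+ 2 + e ^+ 2 - N / 3%:R) + b * (d ^+ 2 + b ^+ 2 + f ^+ 2 - N / 3%:R) +
     c * (e ^+ 2 + f ^+ 2 + c ^+ 2 - N / 3%:R) +
     2 * (d * (a * d + d * b + e * f) + e * (a * e + d * f + e * c) + f * (d * e + b * f + f * c))) = 3%:R * r.
    by rewrite /N /r hc; field.
  rewrite -/N.
  have -> : ((a ^+ 2 + d ^+ 2 + e ^+ 2 - N / 3%:R) ^+ 2 + (d ^+ 2 + b ^+ 2 + f ^+ 2 - N / 3%:R) ^+ 2 +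
      (e ^+ 2 + f ^+ 2 + c ^+ 2 - N / 3%:R) ^+ 2 +
      2 * ((a * d + d * b + e * f) ^+ 2 + (a * e + d * f + e * c) ^+ 2 + (d * e + b * f + f * c) ^+ 2))
     = N^+2 / 6%:R.
    by rewrite /N hc; field.
  have e1 : (3 * r)^+2 = 9%:R * r^+2 by ring.
  have e2 : N * (N^+2 / 6%:R) = N^+3 / 6%:R by field.
  rewrite e1 e2 => h; lra.
set s := Num.sqrt (N / 6%:R).
have s0 : 0 <= s by apply: sqrtr_ge0.
have ss : s^+2 = N / 6%:R by rewrite sqr_sqrtr // divr_ge0 // ler0n.
set p : {poly R} := 'X^3 - (N / 2%:R) *: 'X - r%:P.
have pE t : p.[t] = t^+3 - N / 2%:R * t - r.
  by rewrite /p !hornerE.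
have pm : 0 <= p.[-s].
  rewrite pE.
  have -> : (- s)^+3 - N / 2%:R * - s - r = N / 3%:R * s - r.
    have -> : (-s)^+3 = - (s^+2 * s) by ring.
    by rewrite ss; field.
  rewrite subr_ge0.
  have h3 : 0 <= N / 3%:R * s by rewrite mulr_ge0 // divr_ge0 // ler0n.
  case: (lerP r 0) => hr; first lra.
  have h2 : r^+2 <= (N / 3%:R * s)^+2.
    have -> : (N / 3%:R * s)^+2 = N^+2 / 9%:R * s^+2 by field.
    rewrite ss. have -> : N^+2 / 9%:R * (N / 6%:R) = N^+3 / 54%:R by field.
    lra.
  nra.
set K := 1 + N + `|r|.
have Kd : K = 1 + N + `|r| by [].
have K1 : 1 <= K by rewrite /K; have := normr_ge0 r; lra.
have pK : p.[-K] <= 0.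
  rewrite pE.
  have hr : - r <= `|r| by rewrite -normrN ler_norm.
  have h1 : K * (N / 2%:R + `|r|) <= K * K.
    apply: ler_wpM2l; first lra. have := normr_ge0 r; lra.
  have h2 : K * K <= K^+3.
    have -> : K^+3 = K * K * K by ring.
    have := ler_wpM2l (_ : 0 <= K * K) K1. rewrite mulr1. apply. nra.
  have h4 : `|r| <= K * `|r|. have := normr_ge0 r. nra.
  have -> : (- K)^+3 = - K^+3 by ring.
  nra.
have Ks : - K <= - s.
  rewrite lerN2.
  case: (lerP s 1) => hs1; first by have := normr_ge0 r; lra.
  have : s <= s^+2 by nra. rewrite ss. have := normr_ge0 r. lra.
have hab : p.[-K] <= 0 <= p.[-s] by rewrite pK pm.
have [l /andP [hl1 hl2] /rootP hroot] := poly_ivt Ks hab.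
rewrite pE in hroot.
set S := \matrix_(i < 3, j < 3) sm (a - l) (b - l) (c - l) d e f i j.
have dS : \det S == 0.
  have -> : \det S = - (l^+3 - N / 2%:R * l - r) by rewrite /S det3 /= /r /N hc; field.
  by rewrite hroot oppr0.
have [v v0 vS] := det0P dS.
set x := v 0 j0; set y := v 0 j1; set z := v 0 j2.
have Sj j : (v *m S) 0 j = 0 by rewrite vS mxE.
have E0 := Sj j0; have E1 := Sj j1; have E2 := Sj j2.
rewrite !mxE sum3 !mxE /= -/x -/y -/z in E0.
rewrite !mxE sum3 !mxE /= -/x -/y -/z in E1.
rewrite !mxE sum3 !mxE /= -/x -/y -/z in E2.
set n := x^+2 + y^+2 + z^+2.
have n0 : 0 < n.
  have hx := sqr_ge0 x; have hy := sqr_ge0 y; have hz := sqr_ge0 z.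
  rewrite lt_neqAle; apply/andP; split; last by rewrite /n; lra.
  apply/eqP => hn.
  have : x^+2 = 0 by rewrite /n in hn; lra.
  have : y^+2 = 0 by rewrite /n in hn; lra.
  have : z^+2 = 0 by rewrite /n in hn; lra.
  move=> /eqP; rewrite sqrf_eq0 => /eqP hz0.
  move=> /eqP; rewrite sqrf_eq0 => /eqP hy0.
  move=> /eqP; rewrite sqrf_eq0 => /eqP hx0.
  move/negP: v0; apply; apply/eqP/matrixP => i j; rewrite !mxE ord1.
  case: j => [[|[|[|//]]] Hj].
  - by rewrite -hx0 /x; congr (v 0 _); apply: val_inj.
  - by rewrite -hy0 /y; congr (v 0 _); apply: val_inj.
  - by rewrite -hz0 /z; congr (v 0 _); apply: val_inj.
have hQ : a*x^+2 + b*y^+2 + c*z^+2 + 2*(d*x*y + e*x*z + f*y*z) = l * n.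
  apply/eqP; rewrite -subr_eq0; apply/eqP.
  have -> : a*x^+2 + b*y^+2 + c*z^+2 + 2*(d*x*y + e*x*z + f*y*z) - l * n
     = x * (x * (a - l) + y * d + z * e) + y * (x * d + y * (b - l) + z * f)
       + z * (x * e + y * f + z * (c - l)) by rewrite /n; ring.
  by rewrite E0 E1 E2; ring.
set t := Num.sqrt n.
have t0 : 0 < t by rewrite sqrtr_gt0.
have tt : t^+2 = n by rewrite sqr_sqrtr // ltW.
exists (x / t), (y / t), (z / t); split.
  have -> : (x / t) ^+ 2 + (y / t) ^+ 2 + (z / t) ^+ 2 = n / t^+2.
    by rewrite /n; field; rewrite gt_eqF.
  by rewrite tt divff // gt_eqF.
have -> : a * (x / t) ^+ 2 + b * (y / t) ^+ 2 + c * (z / t) ^+ 2 +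
  2 * (d * (x / t) * (y / t) + e * (x / t) * (z / t) + f * (y / t) * (z / t))
  = (a*x^+2 + b*y^+2 + c*z^+2 + 2*(d*x*y + e*x*z + f*y*z)) / t^+2.
  by field; rewrite gt_eqF.
rewrite hQ tt mulfK //; last by rewrite gt_eqF.
Qed.
End L1.


Lemma ord4_ind (P : 'I_4 -> Prop) : P i0 -> P i1 -> P i2 -> P i3 -> forall i, P i.
Proof.
move=> h0 h1 h2 h3 [[|[|[|[|//]]]] Hi].
- by have -> : Hi = isT by apply: bool_irrelevance.
- by have -> : Hi = isT by apply: bool_irrelevance.
- by have -> : Hi = isT by apply: bool_irrelevance.
- by have -> : Hi = isT by apply: bool_irrelevance.
Qed.

Lemma sum4 (V : nmodType) (F : 'I_4 -> V) : \sum_(i < 4) F i = F i0 + F i1 + F i2 + F i3.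
Proof.
rewrite !big_ord_recl big_ord0 addr0 !addrA.
by congr (F _ + F _ + F _ + F _); apply: val_inj.
Qed.

Section G.
Variable R : rcfType.

Definition sgn (i j : 'I_4) : R :=
  if (val i < val j)%N then 1 else if (val j < val i)%N then -1 else 0.
Definition pidn (a b : nat) : nat :=
  match a, b with
  | 0, 1 => 0 | 0, 2 => 1 | 0, 3 => 2 | 1, 2 => 3 | 1, 3 => 4 | 2, 3 => 5 | _, _ => 0 end.
Definition pid (i j : 'I_4) : nat :=
  if (val i < val j)%N then pidn i j else pidn j i.
Definition prf (a : nat) : 'I_4 := match a with 0 | 1 | 2 => i0 | 3 | 4 => i1 | _ => i2 end.
Definition prs (a : nat) : 'I_4 := match a with 0 => i1 | 1 | 3 => i2 | _ => i3 end.
Definition mk (x : nat -> nat -> R) : tensor4 R := fun i j k l =>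
  sgn i j * sgn k l * (if (pid i j <= pid k l)%N then x (pid i j) (pid k l) else x (pid k l) (pid i j)).
Definition atoms (Rm : tensor4 R) (a b : nat) : R := Rm (prf a) (prs a) (prf b) (prs b).

Lemma canon (Rm : tensor4 R) : is_alg_curv Rm -> Rm = mk (atoms Rm).
Proof.
case=> A B C _.
apply: functional_extensionality => i; apply: functional_extensionality => j.
apply: functional_extensionality => k; apply: functional_extensionality => l.
elim/ord4_ind: i; elim/ord4_ind: j; elim/ord4_ind: k; elim/ord4_ind: l;
rewrite /mk /atoms /sgn /pid /=;
match goal with |- Rm ?i ?j ?k ?l = _ =>
  have := A i j k l; have := A i j l k; have := B i j k l; have := B j i k l;
  have := C i j k l; have := C j i k l; have := C i j l k; have := C j i l k end;
  lra.
Qed.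
End G.


Section G2.
Variable R : rcfType.

Lemma weylE (T : tensor4 R) (lam : R) :
  (forall i j, Ric T i j = lam * delta R i j) ->
  Weyl T = fun a b c d => T a b c d - lam / 6%:R * KN (delta R) (delta R) a b c d.
Proof.
move=> H.
have hs : scal T = 4%:R * lam.
  rewrite /scal sum4 !H /delta /=; ring.
apply: functional_extensionality => a; apply: functional_extensionality => b.
apply: functional_extensionality => c; apply: functional_extensionality => d.
by rewrite /Weyl hs /KN !H; field.
Qed.

Lemma einstein_eqs (x : nat -> nat -> R) (lam : R) :
  (forall i j, Ric (mk x) i j = lam * delta R i j) ->
  [/\ lam = - (x 0 0 + x 1 1 + x 2 2), x 5 5 = x 0 0, x 4 4 = x 1 1, x 3 3 = x 2 2 &
  [/\ x 2 4 = - x 1 3, x 2 5 = x 0 3, x 1 5 = - x 0 4 &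
     [/\ x 4 5 = - x 0 1, x 3 5 = x 0 2 & x 3 4 = - x 1 2]]].
Proof.
move=> H.
have e00 := H i0 i0; have e11 := H i1 i1; have e22 := H i2 i2; have e33 := H i3 i3.
have e01 := H i0 i1; have e02 := H i0 i2; have e03 := H i0 i3.
have e12 := H i1 i2; have e13 := H i1 i3; have e23 := H i2 i3.
move: e00 e11 e22 e33 e01 e02 e03 e12 e13 e23.
rewrite /Ric !sum4 /mk /sgn /pid /delta /=.
move=> *; split; [lra|lra|lra|lra|split; [lra|lra|lra|split; lra]].
Qed.
End G2.


Section G3a.
Variable R : rcfType.

Lemma sumw (G : 'I_4 -> 'I_4 -> R) a b :
  \sum_(i < 4) \sum_(j < 4) wedge R a b i j * G i j = G a b - G b a.
Proof.
elim/ord4_ind: a; elim/ord4_ind: b; rewrite !sum4 /wedge /=; ring.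
Qed.

Lemma sumfadd (G : 'I_4 -> 'I_4 -> R) a b c d :
  \sum_(i < 4) \sum_(j < 4) fadd (wedge R a b) (wedge R c d) i j * G i j =
  (G a b - G b a) + (G c d - G d c).
Proof.
rewrite -!sumw -big_split; apply: eq_bigr => i _; rewrite -big_split.
by apply: eq_bigr => j _; rewrite /fadd mulrDl.
Qed.

Lemma sumfsub (G : 'I_4 -> 'I_4 -> R) a b c d :
  \sum_(i < 4) \sum_(j < 4) fsub (wedge R a b) (wedge R c d) i j * G i j =
  (G a b - G b a) - (G c d - G d c).
Proof.
rewrite -!sumw -sumrB; apply: eq_bigr => i _; rewrite -sumrB.
by apply: eq_bigr => j _; rewrite /fsub mulrBl.
Qed.

Lemma formQE (T : tensor4 R) a b :
  formQ T a b = 4%:R^-1 * \sum_(i < 4) \sum_(j < 4) a i j *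
     (\sum_(k < 4) \sum_(l < 4) b k l * T i j l k).
Proof.
rewrite /formQ; congr (_ * _); apply: eq_bigr => i _; apply: eq_bigr => j _.
rewrite big_distrr; apply: eq_bigr => k _; rewrite big_distrr; apply: eq_bigr => l _.
by rewrite /= mulrA.
Qed.
End G3a.

Section G3.
Variable R : rcfType.
Variables (x : nat -> nat -> R) (lam : R).
Hypothesis H : forall i j, Ric (mk x) i j = lam * delta R i j.
Hypothesis Hb : x 2 3 = x 1 4 - x 0 5.

Let hl : lam = - (x 0 0 + x 1 1 + x 2 2). Proof. by case: (einstein_eqs H). Qed.
Let h55 : x 5 5 = x 0 0. Proof. by case: (einstein_eqs H). Qed.
Let h44 : x 4 4 = x 1 1. Proof. by case: (einstein_eqs H). Qed.
Let h33 : x 3 3 = x 2 2. Proof. by case: (einstein_eqs H). Qed.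
Let h24 : x 2 4 = - x 1 3. Proof. by case: (einstein_eqs H) => _ _ _ _ []. Qed.
Let h25 : x 2 5 = x 0 3. Proof. by case: (einstein_eqs H) => _ _ _ _ []. Qed.
Let h15 : x 1 5 = - x 0 4. Proof. by case: (einstein_eqs H) => _ _ _ _ []. Qed.
Let h45 : x 4 5 = - x 0 1. Proof. by case: (einstein_eqs H) => _ _ _ _ [] _ _ _ []. Qed.
Let h35 : x 3 5 = x 0 2. Proof. by case: (einstein_eqs H) => _ _ _ _ [] _ _ _ []. Qed.
Let h34 : x 3 4 = - x 1 2. Proof. by case: (einstein_eqs H) => _ _ _ _ [] _ _ _ []. Qed.

Ltac wcomp :=
  rewrite /Wplus /Wminus formQE /plus_raw /minus_raw /=;
  rewrite ?sumfadd ?sumfsub; rewrite ?sumfadd ?sumfsub;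
  rewrite (weylE H) /mk /sgn /pid /KN /delta /=;
  rewrite ?h55 ?h44 ?h33 ?h24 ?h25 ?h15 ?h45 ?h35 ?h34 ?Hb hl; field; done.

Lemma A00 : Wplus (mk x) j0 j0 = (x 1 1 + x 2 2 - 2%:R * x 0 0) / 3%:R - x 0 5.
Proof using H Hb. wcomp. Qed.
Lemma A01 : Wplus (mk x) j0 j1 = - x 0 1 + x 0 4.
Proof using H Hb. wcomp. Qed.
Lemma A10 : Wplus (mk x) j1 j0 = - x 0 1 + x 0 4.
Proof using H Hb. wcomp. Qed.
Lemma A02 : Wplus (mk x) j0 j2 = - x 0 2 - x 0 3.
Proof using H Hb. wcomp. Qed.
Lemma A20 : Wplus (mk x) j2 j0 = - x 0 2 - x 0 3.
Proof using H Hb. wcomp. Qed.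
Lemma A11 : Wplus (mk x) j1 j1 = (x 0 0 + x 2 2 - 2%:R * x 1 1) / 3%:R + x 1 4.
Proof using H Hb. wcomp. Qed.
Lemma A12 : Wplus (mk x) j1 j2 = - x 1 2 - x 1 3.
Proof using H Hb. wcomp. Qed.
Lemma A21 : Wplus (mk x) j2 j1 = - x 1 2 - x 1 3.
Proof using H Hb. wcomp. Qed.
Lemma A22 : Wplus (mk x) j2 j2 = (x 0 0 + x 1 1 - 2%:R * x 2 2) / 3%:R - x 1 4 + x 0 5.
Proof using H Hb. wcomp. Qed.
Lemma B00 : Wminus (mk x) j0 j0 = (x 1 1 + x 2 2 - 2%:R * x 0 0) / 3%:R + x 0 5.
Proof using H Hb. wcomp. Qed.
Lemma B01 : Wminus (mk x) j0 j1 = - x 0 1 - x 0 4.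
Proof using H Hb. wcomp. Qed.
Lemma B10 : Wminus (mk x) j1 j0 = - x 0 1 - x 0 4.
Proof using H Hb. wcomp. Qed.
Lemma B02 : Wminus (mk x) j0 j2 = - x 0 2 + x 0 3.
Proof using H Hb. wcomp. Qed.
Lemma B20 : Wminus (mk x) j2 j0 = - x 0 2 + x 0 3.
Proof using H Hb. wcomp. Qed.
Lemma B11 : Wminus (mk x) j1 j1 = (x 0 0 + x 2 2 - 2%:R * x 1 1) / 3%:R - x 1 4.
Proof using H Hb. wcomp. Qed.
Lemma B12 : Wminus (mk x) j1 j2 = - x 1 2 + x 1 3.
Proof using H Hb. wcomp. Qed.
Lemma B21 : Wminus (mk x) j2 j1 = - x 1 2 + x 1 3.
Proof using H Hb. wcomp. Qed.
Lemma B22 : Wminus (mk x) j2 j2 = (x 0 0 + x 1 1 - 2%:R * x 2 2) / 3%:R + x 1 4 - x 0 5.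
Proof using H Hb. wcomp. Qed.
End G3.


Section G4.
Variable R : rcfType.

Definition mkv (a b c d : R) : vec4 R := fun i =>
  match val i with 0 => a | 1 => b | 2 => c | _ => d end.
Definition pl (u v : vec4 R) (i j : 'I_4) : R := u i * v j - u j * v i.
Definition Xa u v := pl u v i0 i1 + pl u v i2 i3.
Definition Xb u v := pl u v i0 i2 - pl u v i1 i3.
Definition Xc u v := pl u v i0 i3 + pl u v i1 i2.
Definition Ya u v := pl u v i0 i1 - pl u v i2 i3.
Definition Yb u v := pl u v i0 i2 + pl u v i1 i3.
Definition Yc u v := pl u v i0 i3 - pl u v i1 i2.

Definition realizes (u v : vec4 R) (c X1 X2 X3 Y1 Y2 Y3 : R) :=
  [/\ Xa u v = c * X1, Xb u v = c * X2, Xc u v = c * X3 &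
   [/\ Ya u v = c * Y1, Yb u v = c * Y2 & Yc u v = c * Y3]].

Lemma eq_mod (a b r k : R) : r = 0 -> a = b + k * r -> a = b.
Proof. by move=> -> ->; rewrite mulr0 addr0. Qed.

Ltac pl_solve hrel :=
  first [ (field; done)
        | (apply: (@eq_mod _ _ _ (1/4%:R) hrel); field; done)
        | (apply: (@eq_mod _ _ _ (-1/4%:R) hrel); field; done)
        | (apply: (@eq_mod _ _ _ (1/2%:R) hrel); field; done)
        | (apply: (@eq_mod _ _ _ (-1/2%:R) hrel); field; done)].

Lemma plane1 (X1 X2 X3 Y1 Y2 Y3 : R) :
  X1^+2 + X2^+2 + X3^+2 = Y1^+2 + Y2^+2 + Y3^+2 -> X1 + Y1 != 0 ->
  exists u v c, c != 0 /\ realizes u v c X1 X2 X3 Y1 Y2 Y3.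
Proof.
move=> hN h0.
have hrel : X1^+2 + X2^+2 + X3^+2 - (Y1^+2 + Y2^+2 + Y3^+2) = 0 by rewrite hN subrr.
set p01 := (X1 + Y1) / 2%:R; set p23 := (X1 - Y1) / 2%:R.
set p02 := (X2 + Y2) / 2%:R; set p13 := (Y2 - X2) / 2%:R.
set p03 := (X3 + Y3) / 2%:R; set p12 := (X3 - Y3) / 2%:R.
exists (mkv p01 0 (-p12) (-p13)), (mkv 0 p01 p02 p03), p01; split.
  by rewrite /p01 mulf_neq0 // invr_eq0 pnatr_eq0.
rewrite /realizes /Xa /Xb /Xc /Ya /Yb /Yc /pl /mkv /= /p01 /p23 /p02 /p13 /p03 /p12.
split; [pl_solve hrel | pl_solve hrel | pl_solve hrel | split; pl_solve hrel].
Qed.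

Lemma plane2 (X1 X2 X3 Y1 Y2 Y3 : R) :
  X1^+2 + X2^+2 + X3^+2 = Y1^+2 + Y2^+2 + Y3^+2 -> X2 + Y2 != 0 ->
  exists u v c, c != 0 /\ realizes u v c X1 X2 X3 Y1 Y2 Y3.
Proof.
move=> hN h0.
have hrel : X1^+2 + X2^+2 + X3^+2 - (Y1^+2 + Y2^+2 + Y3^+2) = 0 by rewrite hN subrr.
set p01 := (X1 + Y1) / 2%:R; set p23 := (X1 - Y1) / 2%:R.
set p02 := (X2 + Y2) / 2%:R; set p13 := (Y2 - X2) / 2%:R.
set p03 := (X3 + Y3) / 2%:R; set p12 := (X3 - Y3) / 2%:R.
exists (mkv p02 p12 0 (-p23)), (mkv 0 p01 p02 p03), p02; split.
  by rewrite /p02 mulf_neq0 // invr_eq0 pnatr_eq0.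
rewrite /realizes /Xa /Xb /Xc /Ya /Yb /Yc /pl /mkv /= /p01 /p23 /p02 /p13 /p03 /p12.
split; [pl_solve hrel | pl_solve hrel | pl_solve hrel | split; pl_solve hrel].
Qed.

Lemma plane3 (X1 X2 X3 Y1 Y2 Y3 : R) :
  X1^+2 + X2^+2 + X3^+2 = Y1^+2 + Y2^+2 + Y3^+2 -> X3 + Y3 != 0 ->
  exists u v c, c != 0 /\ realizes u v c X1 X2 X3 Y1 Y2 Y3.
Proof.
move=> hN h0.
have hrel : X1^+2 + X2^+2 + X3^+2 - (Y1^+2 + Y2^+2 + Y3^+2) = 0 by rewrite hN subrr.
set p01 := (X1 + Y1) / 2%:R; set p23 := (X1 - Y1) / 2%:R.
set p02 := (X2 + Y2) / 2%:R; set p13 := (Y2 - X2) / 2%:R.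
set p03 := (X3 + Y3) / 2%:R; set p12 := (X3 - Y3) / 2%:R.
exists (mkv p03 p13 p23 0), (mkv 0 p01 p02 p03), p03; split.
  by rewrite /p03 mulf_neq0 // invr_eq0 pnatr_eq0.
rewrite /realizes /Xa /Xb /Xc /Ya /Yb /Yc /pl /mkv /= /p01 /p23 /p02 /p13 /p03 /p12.
split; [pl_solve hrel | pl_solve hrel | pl_solve hrel | split; pl_solve hrel].
Qed.

Lemma plane (X1 X2 X3 Y1 Y2 Y3 : R) :
  X1^+2 + X2^+2 + X3^+2 = 1 -> Y1^+2 + Y2^+2 + Y3^+2 = 1 ->
  exists u v c e, [/\ c != 0, e^+2 = 1 & realizes u v c X1 X2 X3 (e*Y1) (e*Y2) (e*Y3)].
Proof.
move=> hX hY.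
have hN : X1^+2 + X2^+2 + X3^+2 = Y1^+2 + Y2^+2 + Y3^+2 by rewrite hX hY.
have hN' : X1^+2 + X2^+2 + X3^+2 = (-Y1)^+2 + (-Y2)^+2 + (-Y3)^+2 by rewrite !sqrrN.
have e1 : (1:R)^+2 = 1 by rewrite expr1n.
have em : (-1:R)^+2 = 1 by rewrite sqrrN expr1n.
have m1 (t : R) : 1 * t = t by rewrite mul1r.
have mm (t : R) : -1 * t = - t by rewrite mulN1r.
case: (eqVneq (X1 + Y1) 0) => a1.
  case: (eqVneq (X1 + - Y1) 0) => b1; last first.
    have [u [v [c [c0 hr]]]] := plane1 hN' b1.
    by exists u, v, c, (-1); rewrite !mm.
  have x10 : X1 = 0 by move/eqP: a1; move/eqP: b1; lra.
  have y10 : Y1 = 0 by move/eqP: a1; move/eqP: b1; lra.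
  case: (eqVneq (X2 + Y2) 0) => a2.
    case: (eqVneq (X2 + - Y2) 0) => b2; last first.
      have [u [v [c [c0 hr]]]] := plane2 hN' b2.
      by exists u, v, c, (-1); rewrite !mm.
    have x20 : X2 = 0 by move/eqP: a2; move/eqP: b2; lra.
    have y20 : Y2 = 0 by move/eqP: a2; move/eqP: b2; lra.
    case: (eqVneq (X3 + Y3) 0) => a3.
      case: (eqVneq (X3 + - Y3) 0) => b3; last first.
        have [u [v [c [c0 hr]]]] := plane3 hN' b3.
        by exists u, v, c, (-1); rewrite !mm.
      have x30 : X3 = 0 by move/eqP: a3; move/eqP: b3; lra.
      by move: hX; rewrite x10 x20 x30 expr0n /= !addr0 => /eqP; rewrite eq_sym oner_eq0.
    have [u [v [c [c0 hr]]]] := plane3 hN a3.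
    by exists u, v, c, 1; rewrite !m1.
  have [u [v [c [c0 hr]]]] := plane2 hN a2.
  by exists u, v, c, 1; rewrite !m1.
have [u [v [c [c0 hr]]]] := plane1 hN a1.
by exists u, v, c, 1; rewrite !m1.
Qed.

Lemma gram (u v : vec4 R) :
  dot u u * dot v v - (dot u v)^+2 =
  (Xa u v ^+2 + Xb u v ^+2 + Xc u v ^+2 + Ya u v ^+2 + Yb u v ^+2 + Yc u v ^+2) / 2%:R.
Proof. by rewrite /dot !sum4 /Xa /Xb /Xc /Ya /Yb /Yc /pl; field. Qed.

Lemma indep (u v : vec4 R) :
  Xa u v ^+2 + Xb u v ^+2 + Xc u v ^+2 + Ya u v ^+2 + Yb u v ^+2 + Yc u v ^+2 != 0 ->
  lin_indep2 u v.
Proof.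
move=> hS a b H.
have hp (t : R) (ht : forall i, t * u i = - ((a * u i + b * v i) * 0) + t * u i) :
   True by [].
have ha i j : a * pl u v i j = 0.
  have -> : a * pl u v i j = (a * u i + b * v i) * v j - (a * u j + b * v j) * v i
    by rewrite /pl; ring.
  by rewrite !H; ring.
have hb i j : b * pl u v i j = 0.
  have -> : b * pl u v i j = - ((a * u i + b * v i) * u j - (a * u j + b * v j) * u i)
    by rewrite /pl; ring.
  by rewrite !H; ring.
set S := (X in X != 0) in hS.
have sa : a^+2 * S = 0.
  have -> : a^+2 * S = (a * pl u v i0 i1 + a * pl u v i2 i3)^+2 + (a * pl u v i0 i2 - a * pl u v i1 i3)^+2
     + (a * pl u v i0 i3 + a * pl u v i1 i2)^+2 + (a * pl u v i0 i1 - a * pl u v i2 i3)^+2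
     + (a * pl u v i0 i2 + a * pl u v i1 i3)^+2 + (a * pl u v i0 i3 - a * pl u v i1 i2)^+2
    by rewrite /S /Xa /Xb /Xc /Ya /Yb /Yc; ring.
  by rewrite !ha; ring.
have sb : b^+2 * S = 0.
  have -> : b^+2 * S = (b * pl u v i0 i1 + b * pl u v i2 i3)^+2 + (b * pl u v i0 i2 - b * pl u v i1 i3)^+2
     + (b * pl u v i0 i3 + b * pl u v i1 i2)^+2 + (b * pl u v i0 i1 - b * pl u v i2 i3)^+2
     + (b * pl u v i0 i2 + b * pl u v i1 i3)^+2 + (b * pl u v i0 i3 - b * pl u v i1 i2)^+2
    by rewrite /S /Xa /Xb /Xc /Ya /Yb /Yc; ring.
  by rewrite !hb; ring.
move/eqP: sa; rewrite mulf_eq0 (negbTE hS) orbF sqrf_eq0 => /eqP ->.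
move/eqP: sb; rewrite mulf_eq0 (negbTE hS) orbF sqrf_eq0 => /eqP ->.
by [].
Qed.
End G4.


Section G5.
Variable R : rcfType.
Variables (x : nat -> nat -> R) (lam : R).
Hypothesis H : forall i j, Ric (mk x) i j = lam * delta R i j.
Hypothesis Hb : x 2 3 = x 1 4 - x 0 5.

Let hl : lam = - (x 0 0 + x 1 1 + x 2 2). Proof. by case: (einstein_eqs H). Qed.
Let h55 : x 5 5 = x 0 0. Proof. by case: (einstein_eqs H). Qed.
Let h44 : x 4 4 = x 1 1. Proof. by case: (einstein_eqs H). Qed.
Let h33 : x 3 3 = x 2 2. Proof. by case: (einstein_eqs H). Qed.
Let h24 : x 2 4 = - x 1 3. Proof. by case: (einstein_eqs H) => _ _ _ _ []. Qed.
Let h25 : x 2 5 = x 0 3. Proof. by case: (einstein_eqs H) => _ _ _ _ []. Qed.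
Let h15 : x 1 5 = - x 0 4. Proof. by case: (einstein_eqs H) => _ _ _ _ []. Qed.
Let h45 : x 4 5 = - x 0 1. Proof. by case: (einstein_eqs H) => _ _ _ _ [] _ _ _ []. Qed.
Let h35 : x 3 5 = x 0 2. Proof. by case: (einstein_eqs H) => _ _ _ _ [] _ _ _ []. Qed.
Let h34 : x 3 4 = - x 1 2. Proof. by case: (einstein_eqs H) => _ _ _ _ [] _ _ _ []. Qed.

Definition qf3 (a00 a01 a02 a10 a11 a12 a20 a21 a22 X1 X2 X3 : R) :=
  X1 * (a00 * X1 + a01 * X2 + a02 * X3) + X2 * (a10 * X1 + a11 * X2 + a12 * X3)
  + X3 * (a20 * X1 + a21 * X2 + a22 * X3).

Definition WA := Wplus (mk x). Definition WB := Wminus (mk x).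

Lemma main_id (u v : vec4 R) :
  tensor_eval (mk x) u v v u =
  (qf3 (WA j0 j0) (WA j0 j1) (WA j0 j2) (WA j1 j0) (WA j1 j1) (WA j1 j2) (WA j2 j0) (WA j2 j1) (WA j2 j2)
       (Xa u v) (Xb u v) (Xc u v)
 + qf3 (WB j0 j0) (WB j0 j1) (WB j0 j2) (WB j1 j0) (WB j1 j1) (WB j1 j2) (WB j2 j0) (WB j2 j1) (WB j2 j2)
       (Ya u v) (Yb u v) (Yc u v)) / 2%:R
 + lam / 3%:R * ((Xa u v ^+2 + Xb u v ^+2 + Xc u v ^+2 + Ya u v ^+2 + Yb u v ^+2 + Yc u v ^+2) / 2%:R).
Proof.
rewrite /WA /WB !(A00 H Hb, A01 H Hb, A02 H Hb, A10 H Hb, A11 H Hb, A12 H Hb, A20 H Hb, A21 H Hb, A22 H Hb).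
rewrite !(B00 H Hb, B01 H Hb, B02 H Hb, B10 H Hb, B11 H Hb, B12 H Hb, B20 H Hb, B21 H Hb, B22 H Hb).
rewrite /tensor_eval !sum4.
rewrite /mk /sgn /pid /= /qf3 /Xa /Xb /Xc /Ya /Yb /Yc /pl.
rewrite ?h55 ?h44 ?h33 ?h24 ?h25 ?h15 ?h45 ?h35 ?h34 ?Hb hl.
by field.
Qed.
End G5.


Section G6.
Variable R : rcfType.

Lemma bianchi_atoms (Rm : tensor4 R) : is_alg_curv Rm ->
  atoms Rm 2 3 = atoms Rm 1 4 - atoms Rm 0 5.
Proof.
case=> A B C D; have := D i0 i1 i2 i3; rewrite /atoms /=.
have := C i1 i2 i0 i3; have := A i2 i0 i1 i3; lra.
Qed.

Variables (x : nat -> nat -> R) (lam sg : R).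
Hypothesis H : forall i j, Ric (mk x) i j = lam * delta R i j.
Hypothesis Hb : x 2 3 = x 1 4 - x 0 5.
Hypothesis Hsg : sg = 1 \/ sg = -1.
Hypothesis Hsec : forall u v, lin_indep2 u v -> 0 <= sg * sec (mk x) u v.

Lemma pointwise :
  normWplus (mk x) + normWminus (mk x) <= `|scal (mk x)| / Num.sqrt 6%:R.
Proof.
have hs : scal (mk x) = 4%:R * lam by rewrite /scal sum4 !H /delta /=; ring.
have sA10 : WA x j1 j0 = WA x j0 j1 by rewrite /WA (A10 H Hb) (A01 H Hb).
have sA20 : WA x j2 j0 = WA x j0 j2 by rewrite /WA (A20 H Hb) (A02 H Hb).
have sA21 : WA x j2 j1 = WA x j1 j2 by rewrite /WA (A21 H Hb) (A12 H Hb).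
have sB10 : WB x j1 j0 = WB x j0 j1 by rewrite /WB (B10 H Hb) (B01 H Hb).
have sB20 : WB x j2 j0 = WB x j0 j2 by rewrite /WB (B20 H Hb) (B02 H Hb).
have sB21 : WB x j2 j1 = WB x j1 j2 by rewrite /WB (B21 H Hb) (B12 H Hb).
have trA : sg * WA x j0 j0 + sg * WA x j1 j1 + sg * WA x j2 j2 = 0.
  by rewrite /WA (A00 H Hb) (A11 H Hb) (A22 H Hb); field.
have trB : sg * WB x j0 j0 + sg * WB x j1 j1 + sg * WB x j2 j2 = 0.
  by rewrite /WB (B00 H Hb) (B11 H Hb) (B22 H Hb); field.
have sg2 : sg^+2 = 1 by case: Hsg => ->; rewrite ?sqrrN expr1n.
set NA := WA x j0 j0 ^+2 + WA x j1 j1 ^+2 + WA x j2 j2 ^+2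
   + 2 * (WA x j0 j1 ^+2 + WA x j0 j2 ^+2 + WA x j1 j2 ^+2).
set NB := WB x j0 j0 ^+2 + WB x j1 j1 ^+2 + WB x j2 j2 ^+2
   + 2 * (WB x j0 j1 ^+2 + WB x j0 j2 ^+2 + WB x j1 j2 ^+2).
have nA : normWplus (mk x) = Num.sqrt NA.
  rewrite /normWplus !sum3 -/(WA x) sA10 sA20 sA21 /NA; congr Num.sqrt; ring.
have nB : normWminus (mk x) = Num.sqrt NB.
  rewrite /normWminus !sum3 -/(WB x) sB10 sB20 sB21 /NB; congr Num.sqrt; ring.
have [x1 [y1 [z1 [n1 hq1]]]] := @L1 R (sg * WA x j0 j0) (sg * WA x j1 j1) (sg * WA x j2 j2) (sg * WA x j0 j1) (sg * WA x j0 j2) (sg * WA x j1 j2) trA.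
have [x2 [y2 [z2 [n2 hq2]]]] := @L1 R (sg * WB x j0 j0) (sg * WB x j1 j1) (sg * WB x j2 j2) (sg * WB x j0 j1) (sg * WB x j0 j2) (sg * WB x j1 j2) trB.
have eNA : (sg * WA x j0 j0) ^+ 2 + (sg * WA x j1 j1) ^+ 2 + (sg * WA x j2 j2) ^+ 2 +
      2 * ((sg * WA x j0 j1) ^+ 2 + (sg * WA x j0 j2) ^+ 2 + (sg * WA x j1 j2) ^+ 2) = NA.
  by rewrite /NA !exprMn sg2; ring.
have eNB : (sg * WB x j0 j0) ^+ 2 + (sg * WB x j1 j1) ^+ 2 + (sg * WB x j2 j2) ^+ 2 +
      2 * ((sg * WB x j0 j1) ^+ 2 + (sg * WB x j0 j2) ^+ 2 + (sg * WB x j1 j2) ^+ 2) = NB.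
  by rewrite /NB !exprMn sg2; ring.
rewrite eNA in hq1; rewrite eNB in hq2.
set QA := WA x j0 j0 * x1^+2 + WA x j1 j1 * y1^+2 + WA x j2 j2 * z1^+2
   + 2 * (WA x j0 j1 * x1 * y1 + WA x j0 j2 * x1 * z1 + WA x j1 j2 * y1 * z1).
set QB := WB x j0 j0 * x2^+2 + WB x j1 j1 * y2^+2 + WB x j2 j2 * z2^+2
   + 2 * (WB x j0 j1 * x2 * y2 + WB x j0 j2 * x2 * z2 + WB x j1 j2 * y2 * z2).
have hA : sg * QA <= - Num.sqrt (NA / 6%:R).
  by move: hq1; congr (_ <= _); rewrite /QA; ring.
have hB : sg * QB <= - Num.sqrt (NB / 6%:R).
  by move: hq2; congr (_ <= _); rewrite /QB; ring.
have [u [v [c [e [c0 e2 [r1 r2 r3 [r4 r5 r6]]]]]]] := plane n1 n2.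
have hsec : sec (mk x) u v = (QA + QB) / 2%:R + lam / 3%:R.
  have cc : c^+2 != 0 by rewrite sqrf_eq0.
  rewrite /sec (main_id H Hb) gram r1 r2 r3 r4 r5 r6 /qf3 sA10 sA20 sA21 sB10 sB20 sB21.
  have Sden : (c * x1) ^+ 2 + (c * y1) ^+ 2 + (c * z1) ^+ 2 + (c * (e * x2)) ^+ 2 +
     (c * (e * y2)) ^+ 2 + (c * (e * z2)) ^+ 2 = 2%:R * c^+2.
    transitivity (c^+2 * (x1^+2 + y1^+2 + z1^+2) + c^+2 * e^+2 * (x2^+2 + y2^+2 + z2^+2)).
      by ring.
    by rewrite n1 n2 e2; ring.
  rewrite Sden.
  move/eqP: e2; rewrite sqrf_eq1 => /orP [] /eqP -> ; rewrite /QA /QB; field; done.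
have hS : Xa u v ^+2 + Xb u v ^+2 + Xc u v ^+2 + Ya u v ^+2 + Yb u v ^+2 + Yc u v ^+2 != 0.
  rewrite r1 r2 r3 r4 r5 r6.
  have -> : (c * x1) ^+ 2 + (c * y1) ^+ 2 + (c * z1) ^+ 2 + (c * (e * x2)) ^+ 2 +
     (c * (e * y2)) ^+ 2 + (c * (e * z2)) ^+ 2 = 2%:R * c^+2.
    transitivity (c^+2 * (x1^+2 + y1^+2 + z1^+2) + c^+2 * e^+2 * (x2^+2 + y2^+2 + z2^+2)).
      by ring.
    by rewrite n1 n2 e2; ring.
  by rewrite mulf_neq0 ?sqrf_eq0 // pnatr_eq0.
have h0 := Hsec (indep hS).
rewrite hsec in h0.
rewrite nA nB hs.
set w := Num.sqrt 6%:R.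
have w0 : 0 < w by rewrite sqrtr_gt0 ltr0n.
have ww : w^+2 = 6%:R by rewrite sqr_sqrtr // ler0n.
have sq (N : R) : 0 <= N -> Num.sqrt (N / 6%:R) = Num.sqrt N / w.
  by move=> hN; rewrite sqrtrM // sqrtrV // ler0n.
have NA0 : 0 <= NA by rewrite /NA; pos.
have NB0 : 0 <= NB by rewrite /NB; pos.
rewrite (sq _ NA0) in hA; rewrite (sq _ NB0) in hB.
have hsl : sg * lam <= `|lam|.
  case: Hsg => ->; first by rewrite mul1r ler_norm.
  by rewrite mulN1r -normrN ler_norm.
have hP : (Num.sqrt NA + Num.sqrt NB) / w <= 2%:R / 3%:R * (sg * lam).
  rewrite mulrDl; lra.
rewrite ler_pdivrMr // in hP.
have -> : `|4%:R * lam| / w = 2%:R / 3%:R * `|lam| * w.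
  rewrite normrM ger0_norm ?ler0n //.
  have -> : 2%:R / 3%:R * `|lam| * w = 2%:R / 3%:R * `|lam| * w^+2 / w.
    by field; rewrite gt_eqF.
  by rewrite ww; field; rewrite gt_eqF.
have : 2%:R / 3%:R * (sg * lam) * w <= 2%:R / 3%:R * `|lam| * w.
  rewrite ler_pM2r // ler_pM2l //; first by rewrite divr_gt0 // ltr0n.
lra.
Qed.
End G6.

End Aux.
Import Aux.

Theorem proposition2p2 (R : rcfType) (M : Type) (Rm : M -> tensor4 R)
  (Hcurv : forall p, is_alg_curv (Rm p))
  (Heinstein : exists lam : R, forall p i j, Ric (Rm p) i j = lam * delta R i j)
  (Hsec : (forall p u v, lin_indep2 u v -> 0 <= sec (Rm p) u v) \/
          (forall p u v, lin_indep2 u v -> sec (Rm p) u v <= 0)) :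
  forall p : M,
    normWplus (Rm p) + normWminus (Rm p) <= `|scal (Rm p)| / Num.sqrt 6%:R.
Proof.
move=> p.
have E := canon (Hcurv p).
have Hb := bianchi_atoms (Hcurv p).
case: Heinstein => lam Hl.
have H : forall i j, Ric (mk (atoms (Rm p))) i j = lam * delta R i j.
  by move=> i j; rewrite -E; apply: Hl.
rewrite E.
case: Hsec => hs.
  apply: (@pointwise R (atoms (Rm p)) lam 1 H Hb); first by left.
  by move=> u v huv; rewrite mul1r -E; apply: hs.
apply: (@pointwise R (atoms (Rm p)) lam (-1) H Hb); first by right.
by move=> u v huv; rewrite mulN1r oppr_ge0 -E; apply: hs.
Qed.
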